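(* Let $f(\mathbf{x}) \in \mathbb{C}[\mathbf{x}]$ be a polynomial that is set-multilinear with respect to a partition $\mathbf{x} = \mathbf{x}_1 \sqcup \cdots \sqcup \mathbf{x}_d$ of its variables. Then the smallest width of a commutative set-multilinear ABP (with respect to this partition) computing $f$ is at most $\mathrm{DPD}(f)$.
   Context: A polynomial is set-multilinear with respect to a partition $\mathbf{x} = \mathbf{x}_1\sqcup\cdots\sqcup\mathbf{x}_d$ if each of its monomials contains exactly one variable from each part $\mathbf{x}_j$ (with degree one). Write $\mathbf{x}_j = \{x_{j,1},\ldots,x_{j,|\mathbf{x}_j|}\}$. A set-multilinear ABP (smABP) of width $w$ computing $f$ consists of a permutation $\sigma$ of $[d]$, matrices $A_{j,k}\in\mathbb{C}^{w\times w}$ for $j\in[d]$, $1\le k\le |\mathbf{x}_j|$, and vectors $\mathbf{u},\mathbf{v}\in\mathbb{C}^w$ such that $f(\mathbf{x}) = \mathbf{u}^T M_{\sigma(1)}(\mathbf{x}_{\sigma(1)})\cdots M_{\sigma(d)}(\mathbf{x}_{\sigma(d)})\mathbf{v}$, where $M_j(\mathbf{x}_j) = \sum_{k=1}^{|\mathbf{x}_j|} A_{j,k} x_{j,k}$; the $A_{j,k}$ are its coefficient matrices. A commutative smABP is one whose coefficient matrices all pairwise commute. For $f \in \mathbb{C}[\mathbf{x}]$, $\mathrm{DPD}(f) := \dim_{\mathbb{C}}\mathrm{span}_{\mathbb{C}}\{\partial_{\mathbf{e}} f : \mathbf{e}\}$ is the dimension of the span of all partial derivatives of $f$ of all orders (including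 $f$ itself), where $\partial_{\mathbf{e}} f$ is the partial derivative with respect to the monomial $\mathbf{x}^{\mathbf{e}}$. *)

(* Defs.v *)
From HB Require Import structures.
From mathcomp Require Import all_boot all_order all_algebra all_fingroup.
From mathcomp Require Import mpoly.
From Stdlib Require Import ClassicalEpsilon.

Set Implicit Arguments.
Unset Strict Implicit.
Unset Printing Implicit Defensive.

Import GRing.Theory.
Local Open Scope ring_scope.

Section Defs.

Variable C : fieldType.

Section Span.
Variable V : lmodType C.

Definition in_span (P : V -> Prop) (v : V) : Prop :=
  exists (k : nat) (g : 'I_k -> V) (c : 'I_k -> C),
    (forall i, P (g i)) /\ v = \sum_(i < k) c i *: g i.

Definition lin_indep (D : nat) (b : 'I_D -> V) : Prop :=
  forall c : 'I_D -> C, \sum_(i < D) c i *: b i = 0 -> forall i, c i = 0.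

Definition is_span_dim (P : V -> Prop) (D : nat) : Prop :=
  exists b : 'I_D -> V,
    [/\ forall i, in_span P (b i),
        lin_indep b &
        forall v, P v -> in_span (fun x => exists i, x = b i) v].

(* dim_C span(P) (a well-defined natural number whenever span(P) is
   finite-dimensional, which is the case for the spans used below) *)
Definition span_dim (P : V -> Prop) : nat :=
  epsilon (inhabits 0%N) (is_span_dim P).
End Span.

Variables n d : nat.

Definition all_partials (f : {mpoly C[n]}) : {mpoly C[n]} -> Prop :=
  fun g => exists e : 'X_{1..n}, g = mderivm e f.

Definition DPD (f : {mpoly C[n]}) : nat := span_dim (all_partials f).

(* The partition x = x_1 |_| ... |_| x_d is given by part : 'I_n -> 'I_d,
   variable 'X_i lying in block x_(part i). *)
Definition set_multilinear (part : 'I_n -> 'I_d) (f : {mpoly C[n]}) : Prop :=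
  forall m : 'X_{1..n}, m \in msupp f ->
    forall j : 'I_d, exists i : 'I_n,
      [/\ part i = j, m i = 1%N &
          forall i' : 'I_n, part i' = j -> i' != i -> m i' = 0%N].

Definition smABP_layer (part : 'I_n -> 'I_d) (w : nat)
    (A : 'I_n -> 'M[C]_w) (j : 'I_d) : 'M[{mpoly C[n]}]_w :=
  \sum_(i < n | part i == j) 'X_i *: map_mx (fun c => c%:MP) (A i).

(* the polynomial u^T M_{s(1)} ... M_{s(d)} v computed by the smABP *)
Definition smABP_poly (part : 'I_n -> 'I_d) (w : nat) (s : 'S_d)
    (A : 'I_n -> 'M[C]_w) (u v : 'cV[C]_w) : {mpoly C[n]} :=
  ((map_mx (fun c => c%:MP) u)^T *m
     foldr (fun j (acc : 'cV[{mpoly C[n]}]_w) => smABP_layer part A j *m acc)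
           (map_mx (fun c => c%:MP) v)
           [seq s j | j <- enum 'I_d]) ord0 ord0.

Definition has_comm_smABP (part : 'I_n -> 'I_d) (f : {mpoly C[n]}) (w : nat)
  : Prop :=
  exists (s : 'S_d) (A : 'I_n -> 'M[C]_w) (u v : 'cV[C]_w),
    (forall i i' : 'I_n, A i *m A i' = A i' *m A i) /\
    f = smABP_poly part s A u v.

End Defs.

(* Main.v *)
Require Import Defs.
From HB Require Import structures.
From mathcomp Require Import all_boot all_order all_algebra all_fingroup.
From mathcomp Require Import mpoly.
From Stdlib Require Import Classical ClassicalEpsilon.
Set Implicit Arguments.
Unset Strict Implicit.
Unset Printing Implicit Defensive.
Import GRing.Theory.
Local Open Scope ring_scope.

Section Lin.
Variable C : fieldType.
Variable V : lmodType C.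

Definition rep D (b : 'I_D -> V) (v : V) :=
  exists c : 'I_D -> C, v = \sum_(i < D) c i *: b i.

Lemma basis_of_list (s : seq V) : exists D (b : 'I_D -> V),
  [/\ forall i, b i \in s, lin_indep b & forall x, x \in s -> rep b x].
Proof.
elim: s => [|x s [D [b [Hbs Hli Hsp]]]].
  exists 0%N, (fun _ => 0); split; first by case.
    by move=> c _ [].
  by [].
have [[c Hc]|Hn] := classic (rep b x).
  exists D, b; split.
  - by move=> i; rewrite in_cons Hbs orbT.
  - exact: Hli.
  - move=> y; rewrite in_cons => /orP [/eqP ->|]; first by exists c.
    exact: Hsp.
pose b' (i : 'I_D.+1) := if unlift ord0 i is Some j then b j else x.
have b'0 : b' ord0 = x by rewrite /b' unlift_none.
have b'l j : b' (lift ord0 j) = b j by rewrite /b' liftK.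
exists D.+1, b'; split.
- move=> i; case: (unliftP ord0 i) => [j ->|->]; first by rewrite b'l in_cons Hbs orbT.
  by rewrite b'0 mem_head.
- move=> c; rewrite big_ord_recl b'0.
  under eq_bigr => j _ do rewrite b'l.
  move=> H0.
  have c0 : c ord0 = 0.
    apply/eqP; apply: contraT => nz; exfalso; apply: Hn.
    exists (fun j => - ((c ord0)^-1 * c (lift ord0 j))).
    have -> : x = (c ord0)^-1 *: (c ord0 *: x) by rewrite scalerA mulVf // scale1r.
    have -> : c ord0 *: x = - \sum_(i < D) c (lift ord0 i) *: b i.
      by apply/eqP; rewrite -addr_eq0 H0.
    rewrite scalerN scaler_sumr -sumrN; apply: eq_bigr => i _.
    by rewrite scalerA scaleNr.
  move: H0; rewrite c0 scale0r add0r => /Hli Hc i.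
  by case: (unliftP ord0 i) => [j ->|->].
- move=> y; rewrite in_cons => /orP [/eqP ->|].
    exists (fun i => (i == ord0)%:R); rewrite big_ord_recl b'0 eqxx scale1r big1 ?addr0 //.
    by move=> i _; rewrite eq_sym (negbTE (neq_lift _ _)) scale0r.
  move=> /Hsp [c ->].
  exists (fun i => if unlift ord0 i is Some j then c j else 0).
  rewrite big_ord_recl unlift_none scale0r add0r; apply: eq_bigr => i _.
  by rewrite liftK b'l.
Qed.

Lemma in_span_rep D (b : 'I_D -> V) (P : V -> Prop) v :
  (forall y, P y -> rep b y) -> in_span P v -> rep b v.
Proof.
move=> HP [k [g [cc [Hg ->]]]].
have /fin_all_exists [cf Hcf] : forall t : 'I_k, exists c : 'I_D -> C,
   g t = \sum_(i < D) c i *: b i by move=> t; exact: HP.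
exists (fun i => \sum_(t < k) cc t * cf t i).
under eq_bigr => t _ do rewrite Hcf scaler_sumr.
rewrite exchange_big /=; apply: eq_bigr => i _.
by rewrite scaler_suml; apply: eq_bigr => t _; rewrite scalerA.
Qed.

Lemma rep_uniq D (b : 'I_D -> V) c c' :
  lin_indep b -> \sum_(i < D) c i *: b i = \sum_(i < D) c' i *: b i ->
  forall i, c i = c' i.
Proof.
move=> Hli E i; apply/eqP; rewrite -subr_eq0; apply/eqP.
apply: (Hli (fun i => c i - c' i)).
under eq_bigr => j _ do rewrite scalerBl.
by rewrite sumrB E subrr.
Qed.

End Lin.
Section Poly.
Variable C : fieldType.
Variables n d : nat.
Variable part : 'I_n -> 'I_d.

Definition SML (js : seq 'I_d) (g : {mpoly C[n]}) : Prop :=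
  forall m : 'X_{1..n}, m \in msupp g -> forall j : 'I_d,
    if j \in js then exists i : 'I_n,
      [/\ part i = j, m i = 1%N &
          forall i' : 'I_n, part i' = j -> i' != i -> m i' = 0%N]
    else forall i, part i = j -> m i = 0%N.

Lemma sml_nil g : SML [::] g -> g = (g@_0)%:MP.
Proof.
move=> H; apply/mpolyP => k; rewrite mcoeffC.
have [->|nz] := eqVneq k 0%MM; first by rewrite mulr1.
rewrite mulr0; apply/eqP; rewrite mcoeff_eq0; apply: contra nz => /H Hk.
apply/eqP/mnmP => i; rewrite mnm0E; exact: (Hk (part i)).
Qed.

Lemma sml_deriv js j i g : SML (rcons js j) g -> j \notin js -> part i = j ->
  SML js (g^`M(i)).
Proof.
move=> H jn pij m; rewrite mcoeff_msupp mcoeff_deriv => nz.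
have /H Hm : (m + U_(i))%MM \in msupp g.
  by rewrite mcoeff_msupp; apply: contra nz => /eqP ->; rewrite mul0rn.
move=> j'; have := Hm j'; rewrite mem_rcons in_cons.
have [->|ne] := eqVneq j' j.
  rewrite (negbTE jn) /= => -[i0 [pi0 mi0 Hoth]].
  move=> i' pi'.
  have [ei|nei] := eqVneq i' i0.
    subst i'; move: mi0; rewrite mnmDE mnm1E.
    have [ei|nei] := eqVneq i i0; first by subst; rewrite addn1 => -[].
    by rewrite addn0 => _; move: (Hoth i pij nei); rewrite mnmDE mnm1E eqxx addn1.
  by move: (Hoth i' pi' nei); rewrite mnmDE; case: (m i').
rewrite /=; case: (j' \in js).
  move=> [i0 [pi0 mi0 Hoth]]; exists i0; split => //.
    by move: mi0; rewrite mnmDE mnm1E; case: eqP => [e|_]; [subst i0; move: ne; rewrite -pi0 pij eqxx|rewrite addn0].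
  move=> i' pi' nei; move: (Hoth i' pi' nei); rewrite mnmDE; case: (m i') => //.
move=> Hz i' pi'; move: (Hz i' pi'); rewrite mnmDE; case: (m i') => //.
Qed.

Lemma euler js j g : SML js g -> j \in js ->
  g = \sum_(i < n | part i == j) 'X_i * g^`M(i).
Proof.
move=> H jin.
transitivity (\sum_(m <- msupp g) g@_m *: ('X_[m] : {mpoly C[n]})); first exact: mpolyE.
have Ed : forall i, g^`M(i) = \sum_(m <- msupp g) (g@_m *: 'X_[m])^`M(i).
  by move=> i; rewrite {1}[g]mpolyE raddf_sum.
under [in RHS]eq_bigr => i _ do rewrite Ed mulr_sumr.
rewrite [in RHS]exchange_big /= big_seq_cond [in RHS]big_seq_cond.
apply: eq_bigr => m /andP [mm _].
have := H m mm j; rewrite jin => -[i0 [pi0 mi0 Hoth]].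
rewrite (bigD1 i0) /=; last by rewrite pi0 eqxx.
rewrite big1 ?addr0; last first.
  move=> i /andP [/eqP pi nei].
  by rewrite mderivZ mderivX (Hoth i pi nei) scale0r scaler0 mulr0.
rewrite mderivZ mderivX mi0 scale1r -scalerAr; congr (_ *: _).
rewrite -mpolyXD; congr 'X_[_]; apply/mnmP => k.
rewrite mnmDE mnmBE mnm1E; case: eqP => [<-|]; first by rewrite mi0.
by rewrite add0n subn0.
Qed.

Lemma mderivm_big (e : 'X_{1..n}) (f : {mpoly C[n]}) :
  (msize f <= mdeg e)%N -> f^`M[e] = 0.
Proof.
move=> le; rewrite mderivmE big_seq big1 // => m mm.
have lt := msize_mdeg_lt mm.
have [i lti] : exists i, (m i < e i)%N.
  apply/existsP; apply: contraT; rewrite negb_exists => /forallP Hall.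
  have : (mdeg e <= mdeg m)%N.
    rewrite !mdegE; apply: leq_sum => i _; move: (Hall i); rewrite -leqNgt //.
  by move=> H; move: (leq_trans (leq_trans lt le) H); rewrite ltnn.
rewrite (bigD1 i) //= ffact_small // mul0n mulr0 scale0r //.
Qed.

End Poly.
Section Main.
Variable C : fieldType.
Variables n d D : nat.
Variable part : 'I_n -> 'I_d.
Variable b : 'I_D -> {mpoly C[n]}.
Variable A : 'I_n -> 'M[C]_D.
Variable u : 'cV[C]_D.
Hypothesis HA : forall i (c : 'cV[C]_D) g, g = \sum_(l < D) c l ord0 *: b l ->
  g^`M(i) = \sum_(l < D) (A i *m c) l ord0 *: b l.
Hypothesis Hu : forall k, u k ord0 = (b k)@_0.

Let F := (fun j (acc : 'cV[{mpoly C[n]}]_D) => smABP_layer part A j *m acc).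

Lemma foldr_lin js (Q : pred 'I_n) (a : 'I_n -> {mpoly C[n]}) W :
  foldr F (\sum_(i | Q i) a i *: W i) js = \sum_(i | Q i) a i *: foldr F (W i) js.
Proof.
elim: js => [|j js IH] //=; rewrite IH /F mulmx_sumr; apply: eq_bigr => i _.
by rewrite scalemxAr.
Qed.

Lemma inv js : uniq js -> forall g (c : 'cV[C]_D),
  g = \sum_(l < D) c l ord0 *: b l -> SML part js g ->
  ((map_mx (fun c => c%:MP) u)^T *m foldr F (map_mx (fun c => c%:MP) c) js)
     ord0 ord0 = g.
Proof.
elim/last_ind: js => [|js j IH] Hu' g c Hg Hs.
  rewrite /= (sml_nil Hs) !mxE.
  have -> : g@_0 = \sum_(l < D) c l ord0 * (b l)@_0.
    rewrite Hg raddf_sum; apply: eq_bigr => l _; exact: mcoeffZ.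
  rewrite raddf_sum; apply: eq_bigr => l _; rewrite !mxE Hu -mpolyCM mulrC //.
move: Hu'; rewrite rcons_uniq => /andP [jn Hu'].
rewrite foldr_rcons.
have -> : F j (map_mx (fun c => c%:MP) c) =
   \sum_(i < n | part i == j) 'X_i *: map_mx (fun c => c%:MP) (A i *m c).
  rewrite /F /smABP_layer mulmx_suml; apply: eq_bigr => i _.
  by rewrite -scalemxAl map_mxM.
rewrite foldr_lin mulmx_sumr summxE.
rewrite [RHS](euler (j := j) Hs); last by rewrite mem_rcons mem_head.
apply: eq_bigr => i /eqP pij.
rewrite -scalemxAr mxE (IH Hu' (g^`M(i)) (A i *m c)) //; first exact: HA.
exact: sml_deriv Hs jn pij.
Qed.

End Main.

Unset Implicit Arguments.
Set Strict Implicit.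

Theorem theorem1p6 (C : numClosedFieldType) (n d : nat)
    (part : 'I_n -> 'I_d) (part_blocks_nonempty : forall j : 'I_d, exists i, part i = j)
    (f : {mpoly C[n]}) (Hf : set_multilinear part f) :
  exists w : nat, (w <= DPD f)%N /\ has_comm_smABP part f w.
Proof.
pose P := all_partials f.
have Hex : exists D, is_span_dim P D.
  pose s := [seq f^`M[bmnm e] | e : 'X_{1..n < msize f}].
  have [D [b [Hbs Hli Hsp]]] := basis_of_list s.
  exists D, b; split.
  - move=> i; have /mapP [e _ ->] := Hbs i.
    exists 1%N, (fun _ => f^`M[bmnm e]), (fun _ => 1); split.
      by move=> _; exists (bmnm e).
    by rewrite big_ord1 scale1r.
  - exact: Hli.
  - move=> v [e ->]; have [lt|ge] := ltnP (mdeg e) (msize f).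
      have := Hsp (f^`M[bmnm (BMultinom lt)]) (map_f _ (mem_enum _ _)).
      move=> [c Hc]; exists D, b, c; split => //= i; by exists i.
    rewrite mderivm_big //; exists 0%N, (fun _ => 0), (fun _ => 0); split.
      by case.
    by rewrite big_ord0.
have HD := epsilon_spec (inhabits 0%N) (is_span_dim P) Hex.
change (is_span_dim P (DPD f)) in HD.
move: HD; set D := DPD f => -[b [Hbsp Hli Hgen]].
have Hbrep : forall y, (exists i, y = b i) -> rep b y.
  move=> y [i ->]; exists (fun k => (k == i)%:R).
  rewrite (bigD1 i) //= eqxx scale1r big1 ?addr0 // => k /negbTE ->.
  by rewrite scale0r.
have HPrep : forall v, P v -> rep b v.
  by move=> v Pv; apply: (in_span_rep Hbrep); exact: Hgen.
have Hder : forall i v, P v -> P (v^`M(i)).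
  by move=> i v [e ->]; exists (e + U_(i))%MM; rewrite mderivmDm mderivmU1m.
have Hdb : forall i k, rep b ((b k)^`M(i)).
  move=> i k; apply: (in_span_rep HPrep).
  have [kk [g [cc [Hg ->]]]] := Hbsp k.
  exists kk, (fun t => (g t)^`M(i)), cc; split; first by move=> t; apply: Hder.
  by rewrite raddf_sum; apply: eq_bigr => t _; exact: mderivZ.
have [a Ha] : exists a : 'I_n -> 'I_D -> 'I_D -> C,
    forall i k, (b k)^`M(i) = \sum_(l < D) a i k l *: b l.
  have H1 : forall i, exists ai : 'I_D -> 'I_D -> C,
      forall k, (b k)^`M(i) = \sum_(l < D) ai k l *: b l.
    move=> i; exact: (@fin_all_exists _ (fun _ => 'I_D -> C)
      (fun k ak => (b k)^`M(i) = \sum_(l < D) ak l *: b l) (fun k => Hdb i k)).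
  exact: (@fin_all_exists _ (fun _ => 'I_D -> 'I_D -> C)
      (fun i ai => forall k, (b k)^`M(i) = \sum_(l < D) ai k l *: b l) H1).
pose A i := \matrix_(l < D, k < D) a i k l.
pose u := \col_(k < D) (b k)@_0.
have HA : forall i (c : 'cV[C]_D) g, g = \sum_(l < D) c l ord0 *: b l ->
    g^`M(i) = \sum_(l < D) (A i *m c) l ord0 *: b l.
  move=> i c g ->; rewrite raddf_sum /=.
  under eq_bigr => k _ do rewrite mderivZ Ha scaler_sumr.
  rewrite exchange_big; apply: eq_bigr => l _; rewrite mxE scaler_suml.
  by apply: eq_bigr => k _; rewrite !mxE scalerA mulrC.
have Hu : forall k, u k ord0 = (b k)@_0 by move=> k; rewrite mxE.
have [cf0 Hcf0] := HPrep f (ex_intro _ 0%MM (esym (mderivm0m f))).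
pose cf := \col_(l < D) cf0 l.
have Hcf : f = \sum_(l < D) cf l ord0 *: b l.
  by rewrite Hcf0; apply: eq_bigr => l _; rewrite mxE.
exists D; split => //.
exists 1%g, A, u, cf; split.
  move=> i i'; apply/matrixP => l k.
  have Hk : b k = \sum_(l < D) (delta_mx k ord0 : 'cV[C]_D) l ord0 *: b l.
    rewrite (bigD1 k) //= mxE !eqxx scale1r big1 ?addr0 // => l' /negbTE nl.
    by rewrite mxE nl scale0r.
  have E1 := HA i _ _ (HA i' _ _ Hk).
  have E2 := HA i' _ _ (HA i _ _ Hk).
  rewrite mderiv_comm in E2.
  have := rep_uniq Hli (etrans (esym E1) E2) l.
  by rewrite !mulmxA -!colE !mxE.
rewrite /smABP_poly.
have -> : [seq (1%g : 'S_d) j | j <- enum 'I_d] = enum 'I_d.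
  by rewrite (@eq_map _ _ _ id) ?map_id // => j; exact: perm1.
symmetry; apply: (inv HA Hu (enum_uniq _) Hcf).
by move=> m mm j; rewrite mem_enum; exact: Hf.
Qed.
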